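(* Let $D$ be a strong nonseparable digraph and let $(D_0,D_1,\ldots,D_k)$ be an ear decomposition of $D$. Let $i\in\{0,\ldots,k-1\}$ and let $P_i=(x_0,x_1,\ldots,x_{r-1},x_r)$ be the ear of $D_i$ in $D$ (so $D_{i+1}=D_i\cup P_i$), with $l(P_i)\geq 2$. If $D_i$ has a kernel $N$ and one of the following holds: (1) $x_0,x_r\in N$ and $l(P_i)$ is even; (2) $x_0\in N$, $x_r\notin N$ and $l(P_i)$ is odd; (3) $x_0\notin N$ and $x_r\in N$; (4) $x_0,x_r\notin N$; then $D_{i+1}$ has a kernel.
   Context: All digraphs are finite, without loops or multiple arcs. Paths and cycles are directed; the length $l(P)$ of a path $P$ is its number of arcs. A digraph is strong if for every ordered pair of vertices $x,y$ there is a directed path from $x$ to $y$; it is nonseparable if its underlying undirected graph is nonseparable (has no cut vertex). For a subdigraph $H$ of $D$, an ear of $H$ in $D$ is a directed path $(x_0,\ldots,x_r)$ in $D$ whose end vertices lie in $H$ and whose internal vertices do not lie in $H$. An ear decomposition of a nonseparable strong digraph $D$ is a sequence $(D_0,\ldots,D_k)$ of nonseparable strong subdigraphs of $D$ such that $D_0$ is a directed cycle, $D_{j+1}=D_j\cup P_j$ with $P_j$ an ear of $D_j$ in $D$ for each $j\in\{0,\ldots,k-1\}$, and $D_k=D$. A kernel of a digraph is a set $N$ of vertices that is independent (no arc between two of its vertices) and absorbent (every vertex not in $N$ has an out-neighbour in $N$). *)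

(* Defs.v *)
From mathcomp Require Import all_boot.
Set Implicit Arguments. Unset Strict Implicit. Unset Printing Implicit Defensive.

(* A digraph D is given by a finite vertex type T and an arc relation E
   (loopless).  A subdigraph is a pair (vertex set, arc set). *)
Definition subdg (T : finType) := ({set T} * {set (T * T)})%type.

Section Digraphs.
Variable T : finType.

Definition full_dg (E : rel T) : subdg T := (setT, [set a | E a.1 a.2]).

Definition is_subdigraph (E : rel T) (H : subdg T) : Prop :=
  H.1 \subset setT /\
  forall a, a \in H.2 -> [/\ E a.1 a.2, a.1 \in H.1 & a.2 \in H.1].

Definition arel (H : subdg T) : rel T := fun x y => (x, y) \in H.2.

Definition is_dpath (r : rel T) (p : seq T) : bool :=
  if p is x :: q then uniq p && path r x q else false.

Definition plen (p : seq T) : nat := (size p).-1.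

Definition arcs_of (p : seq T) : {set T * T} :=
  [set a | a \in zip p (behead p)].

Definition verts_of (p : seq T) : {set T} := [set x | x \in p].

(* internal vertices x_1 .. x_{r-1} *)
Definition internal (p : seq T) : seq T :=
  if p is x :: q then behead (belast x q) else [::].

Definition strong (H : subdg T) : Prop :=
  forall x y, x \in H.1 -> y \in H.1 ->
    exists p, [/\ is_dpath (arel H) p, head x p = x, last x p = y
                 & all (fun z => z \in H.1) p].

Definition uconnected (V : {set T}) (A : {set T * T}) : Prop :=
  forall x y, x \in V -> y \in V ->
    connect (fun u v => [&& u \in V, v \in V & ((u, v) \in A) || ((v, u) \in A)]) x y.

Definition nonseparable (H : subdg T) : Prop :=
  uconnected H.1 H.2 /\ forall v, v \in H.1 -> uconnected (H.1 :\ v) H.2.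

Definition is_dcycle (H : subdg T) : Prop :=
  exists c : seq T, [/\ 2 <= size c, uniq c,
     H.1 = [set x | x \in c] & H.2 = [set a | a \in zip c (rot 1 c)]].

Definition is_ear (E : rel T) (H : subdg T) (p : seq T) : Prop :=
  if p is x :: q then
    [/\ is_dpath E p, x \in H.1, last x q \in H.1
      & all (fun z => z \notin H.1) (internal p)]
  else False.

Definition add_ear (H : subdg T) (p : seq T) : subdg T :=
  (H.1 :|: verts_of p, H.2 :|: arcs_of p).

Definition ear_decomposition (E : rel T) (k : nat)
    (Ds : nat -> subdg T) (Ps : nat -> seq T) : Prop :=
  [/\ forall j, j <= k ->
        [/\ is_subdigraph E (Ds j), strong (Ds j) & nonseparable (Ds j)],
      is_dcycle (Ds 0),
      forall j, j < k -> is_ear E (Ds j) (Ps j) /\ Ds j.+1 = add_ear (Ds j) (Ps j)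
    & Ds k = full_dg E].

Definition is_kernel (H : subdg T) (N : {set T}) : Prop :=
  [/\ N \subset H.1,
      forall u v, u \in N -> v \in N -> (u, v) \notin H.2
    & forall u, u \in H.1 -> u \notin N -> exists2 v, v \in N & (u, v) \in H.2].

End Digraphs.

(* Main.v *)
Require Import Defs.
From mathcomp Require Import all_boot.
From mathcomp Require Import zify.

Lemma zip_index (T : eqType) (q : seq T) (a u v : T) :
  uniq (a :: q) -> (u, v) \in zip (a :: q) q ->
  [/\ u \in a :: q, v \in a :: q & index v (a :: q) = (index u (a :: q)).+1].
Proof.
elim: q a => [|b q IH] a //=.
move=> /andP[anb Uq]; rewrite in_cons => /orP[/eqP[-> ->]|H].
  have ab : (b == a) = false.
    by apply/negbTE; apply: contra anb => /eqP ->; rewrite mem_head.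
  rewrite /= eqxx; case: ifP => [/eqP ba|_]; first by rewrite ba mem_head in anb.
  by rewrite !in_cons !eqxx orbT.
have [uq vq iv] := IH b Uq H.
have ua : (u == a) = false by apply/negbTE; apply: contra anb => /eqP <-.
have va : (v == a) = false by apply/negbTE; apply: contra anb => /eqP <-.
split; [by apply/orP; right | by apply/orP; right | by rewrite (eq_sym a v) (eq_sym a u) ua va; move: iv => /= ->].
Qed.

Lemma zip_nth (T : eqType) (q : seq T) (a x : T) j :
  j < size q -> (nth x (a :: q) j, nth x (a :: q) j.+1) \in zip (a :: q) q.
Proof.
elim: q a j => [|b q IH] a [|j] //=; first by rewrite mem_head.
move=> hj; rewrite in_cons; apply/orP; right; exact: (IH b j hj).
Qed.

Theorem mainTheorem11 (T : finType) (E : rel T) (Eirr : irreflexive E)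
  (Dstrong : strong (full_dg E)) (Dnonsep : nonseparable (full_dg E))
  (k : nat) (Ds : nat -> subdg T) (Ps : nat -> seq T)
  (Hdec : ear_decomposition E k Ds Ps)
  (i : nat) (hi : i < k) (x0 : T) (mid : seq T) (xr : T)
  (HP : Ps i = x0 :: rcons mid xr)
  (Hlen : 2 <= plen (Ps i))
  (N : {set T}) (HN : is_kernel (Ds i) N)
  (Hcase : [\/ [/\ x0 \in N, xr \in N & ~~ odd (plen (Ps i))],
               [/\ x0 \in N, xr \notin N & odd (plen (Ps i))],
               x0 \notin N /\ xr \in N
             | x0 \notin N /\ xr \notin N]) :
  exists N' : {set T}, is_kernel (Ds i.+1) N'.
Proof.
case: Hdec => Hall _ Hear _.
have [Hsd _ _] := Hall i (ltnW hi).
have [Hei ->] := Hear i hi.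
move: Hei Hsd HN Hcase Hlen; rewrite HP /plen /= size_rcons.
case: (Ds i) => V A /=.
set r := (size mid).+1.
set p := x0 :: rcons mid xr.
rewrite /is_ear /= last_rcons belast_rcons /=.
move=> [/andP[Hu _] Hx0V HxrV /allP HmidV] [_ Hsub] [HN1 HN2 HN3] Hcase Hlen.
have HmidV' : forall z, z \in mid -> z \notin V by move=> z /HmidV.
have HNV : forall z, z \in N -> z \in V by move=> z; apply: (subsetP HN1).
have Hsz : size p = r.+1 by rewrite /p /= size_rcons.
have Hx0idx : index x0 p = 0 by rewrite /p /= eqxx.
have Hxrp : xr \in p by rewrite /p in_cons mem_rcons mem_head orbT.
have Hx0p : x0 \in p by rewrite mem_head.
have {}Hu : uniq p := Hu.
have Hxridx : index xr p = r.
  have nx : xr \notin x0 :: mid.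
    by move: Hu; rewrite /p -[x0 :: rcons mid xr]/(rcons (x0 :: mid) xr) rcons_uniq => /andP[].
  rewrite /p -[x0 :: rcons mid xr]/(rcons (x0 :: mid) xr).
  by rewrite -cats1 index_cat (negbTE nx) /= eqxx addn0.
have Hmidp : forall z, z \in mid -> z \in p.
  by move=> z zm; rewrite /p in_cons mem_rcons in_cons zm !orbT.
have Hpmid : forall z, z \in p -> 0 < index z p < r -> z \in mid.
  move=> z zp hz.
  have zx0 : z != x0 by apply: contraTneq hz => ->; rewrite Hx0idx.
  have zxr : z != xr by apply: contraTneq hz => ->; rewrite Hxridx ltnn andbF.
  by move: zp; rewrite /p in_cons mem_rcons in_cons (negbTE zx0) (negbTE zxr).
have Hidxmid : forall z, z \in mid -> 0 < index z p < r.
  move=> z zm; have zp := Hmidp z zm.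
  have zx0 : z != x0 by apply: contraNneq (HmidV' z zm) => ->.
  have zxr : z != xr by apply: contraNneq (HmidV' z zm) => ->.
  have Hl : index z p < size p by rewrite index_mem.
  have Hne : index z p != r.
    by apply: contra zxr => /eqP e; rewrite -(nth_index x0 zp) e -Hxridx nth_index.
  have Hne0 : index z p != 0.
    by apply: contra zx0 => /eqP e; rewrite -(nth_index x0 zp) e -Hx0idx nth_index.
  by move: Hl; rewrite Hsz ltnS => Hl; rewrite lt0n Hne0 ltn_neqAle Hne Hl.
rewrite /is_kernel /add_ear /verts_of /arcs_of /=.
pose sel j := odd (j + r) == (xr \notin N).
exists (N :|: [set x in mid | sel (index x p)]).
split.
- apply/subsetP => z; rewrite !(in_setU, in_set) => /orP[zN|/andP[zm _]].
    by rewrite HNV.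
  by rewrite Hmidp ?orbT.
- move=> u v; rewrite !(in_setU, in_set) => uN vN; apply/negP => /orP[uvA|uvP].
    have [_ uV vV] := Hsub _ uvA; rewrite /= in uV vV.
    have uN' : u \in N.
      by case/orP: uN => // /andP[/HmidV' um _]; rewrite uV in um.
    have vN' : v \in N.
      by case/orP: vN => // /andP[/HmidV' vm _]; rewrite vV in vm.
    by move: (HN2 u v uN' vN'); rewrite uvA.
  have [up vp hv] := @zip_index _ _ _ _ _ Hu uvP.
  have vl : index v p < size p by rewrite index_mem.
  rewrite -/p in hv vl up vp.
  case: (posnP (index u p)) => hu0.
    have ux0 : u = x0 by rewrite -(nth_index x0 up) hu0.
    subst u.
    have vm : v \in mid by apply: Hpmid => //; rewrite hv hu0.
    have x0N : x0 \in N.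
      by case/orP: uN => // /andP[/HmidV' um _]; rewrite Hx0V in um.
    have sv : sel 1.
      case/orP: vN => [/HNV vV|/andP[_]]; first by move: (HmidV' v vm); rewrite vV.
      by rewrite hv hu0.
    move: sv; rewrite /sel.
    by case: Hcase => [[_ -> /negbTE ho]|[_ -> ho]|[/negP]|[/negP]] //=;
      rewrite ?ho.
  have um : u \in mid by apply: Hpmid => //; rewrite hu0 -ltnS -Hsz -hv.
  have su : sel (index u p).
    case/orP: uN => [/HNV uV|/andP[_] //]; by move: (HmidV' u um); rewrite uV.
  case: (eqVneq (index v p) r) => hvr.
    have vxr : v = xr by rewrite -(nth_index x0 vp) hvr -Hxridx nth_index.
    subst v.
    have xrN : xr \in N by case/orP: vN => // /andP[/HmidV' xm _]; rewrite HxrV in xm.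
    move: su; rewrite /sel xrN /=.
    have -> : index u p + r = (index u p + index u p).+1 by rewrite -hvr hv addnS.
    by rewrite /= addnn odd_double.
  have vr : index v p < r by rewrite ltn_neqAle hvr -ltnS -Hsz vl.
  have vm : v \in mid by apply: Hpmid => //; rewrite vr andbT hv.
  have sv : sel (index v p).
    case/orP: vN => [/HNV vV|/andP[_] //]; by move: (HmidV' v vm); rewrite vV.
  by move: su sv; rewrite /sel hv addSn /=; case: (odd _); case: (xr \in N).
- move=> u; rewrite !(in_setU, in_set) => /orP[uV|uP] uN'.
    have uN : u \notin N by apply: contra uN' => ->.
    have [v vN uvA] := HN3 u uV uN.
    by exists v; rewrite !(in_setU, in_set) ?vN ?uvA.
  case uV: (u \in V).
    have uN : u \notin N by apply: contra uN' => ->.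
    have [v vN uvA] := HN3 u uV uN.
    by exists v; rewrite !(in_setU, in_set) ?vN ?uvA.
  have um : u \in mid.
    by move: uP; rewrite /p in_cons mem_rcons in_cons; case/or3P => // /eqP e;
      move: uV; rewrite e ?Hx0V ?HxrV.
  have [h0 hr] := andP (Hidxmid u um).
  have su : ~~ sel (index u p) by move: uN'; rewrite um /=; case/norP.
  pose v := nth x0 p (index u p).+1.
  have Harc : (u, v) \in zip p (rcons mid xr).
    rewrite -{1}(nth_index x0 (Hmidp u um)) /v /p.
    by apply: zip_nth; rewrite size_rcons.
  have hv : index v p = (index u p).+1 by rewrite index_uniq // Hsz.
  have vp : v \in p by rewrite mem_nth // Hsz.
  exists v; last by rewrite !(in_setU, in_set) Harc orbT.
  case: (eqVneq (index u p).+1 r) => hvr.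
    have vxr : v = xr by rewrite -(nth_index x0 vp) hv hvr -Hxridx nth_index.
    rewrite vxr !(in_setU, in_set); apply/orP; left.
    move: su; rewrite /sel.
    have -> : index u p + r = (index u p + index u p).+1 by rewrite -hvr addnS.
    by rewrite /= addnn odd_double /=; case: (xr \in N).
  have vm : v \in mid by apply: Hpmid => //; rewrite hv /= ltn_neqAle hvr hr.
  rewrite !(in_setU, in_set) vm hv /=; apply/orP; right.
  by move: su; rewrite /sel addSn /=; case: (odd _); case: (xr \in N).
Qed.
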